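(* Let $0<\alpha<1$ and let $g_\alpha$ be the $L^\infty$ Lorentz metric on $\mathbb{R}^4$ with global coordinates $(t,x,y,z)$ given by $g_\alpha = -dt^2 + \rho$, where $$\rho = \Big(\tfrac{1+\alpha^2}{2}+\tfrac{1-\alpha^2}{2}f_1\Big)dx^2 + \Big(\tfrac{1+\alpha^2}{2}-\tfrac{1-\alpha^2}{2}f_1\Big)dy^2 + (1-\alpha^2)f_2\,dx\,dy + dz^2,$$ with $f_1(x,y)=\frac{x^2-y^2}{x^2+y^2}$, $f_2(x,y)=\frac{2xy}{x^2+y^2}$ for $(x,y)\neq(0,0)$. Then: (i) for every $(x,y,z)$ with $(x,y)\ne(0,0)$ and every $v=(v_1,v_2,v_3)\in\mathbb{R}^3$ one has $\rho(x,y,z)(v,v)\ge \alpha^2(v_1^2+v_2^2)+v_3^2$; in particular $\rho$ is an $L^\infty$ Riemannian metric on $\mathbb{R}^3$; (ii) for every $t_0\in\mathbb{R}$, every inextendible $C^1$ curve $\gamma=(\gamma_0,\gamma_1)\colon I\to\mathbb{R}\times\mathbb{R}^3$ ($I$ an open interval) with $\dot\gamma(s)\neq 0$ for all $s$ and $g_\alpha(\gamma(s))(\dot\gamma(s),\dot\gamma(s))<0$ for almost every $s$ meets the hypersurface $\{t_0\}\times\mathbb{R}^3$ exactly once.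
   Context: Here $f_1,f_2$ are Borel measurable bounded functions (their values on the null set $\{x=y=0\}$ are irrelevant), so $s\mapsto g_\alpha(\gamma(s))(\dot\gamma(s),\dot\gamma(s))$ is Borel measurable for $C^1$ curves. A curve is inextendible if it has no endpoint (no limit) at either end of its parameter interval. *)

(* Defs.v *)
From HB Require Import structures.
From mathcomp Require Import all_boot all_order all_algebra.
From mathcomp Require Import all_classical all_reals all_analysis.
Set Implicit Arguments. Unset Strict Implicit. Unset Printing Implicit Defensive.
Import Order.TTheory GRing.Theory Num.Theory.
Import numFieldNormedType.Exports.
Local Open Scope classical_set_scope.
Local Open Scope ring_scope.

(* f1, f2 on (x,y) <> (0,0); at the null set {x = y = 0} they take the
   arbitrary constant values c1, c2 (the theorem is stated for every choice). *)
Definition f1 {R : realType} (c1 x y : R) : R :=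
  if (x == 0) && (y == 0) then c1 else (x ^+ 2 - y ^+ 2) / (x ^+ 2 + y ^+ 2).
Definition f2 {R : realType} (c2 x y : R) : R :=
  if (x == 0) && (y == 0) then c2 else (2 * x * y) / (x ^+ 2 + y ^+ 2).

(* rho(x,y,z)(v,v) ; dx dy is the symmetric product, so the cross term in
   rho(v,v) is (1-alpha^2) f2 v1 v2. *)
Definition rho {R : realType} (alpha c1 c2 x y z v1 v2 v3 : R) : R :=
  ((1 + alpha ^+ 2) / 2 + (1 - alpha ^+ 2) / 2 * f1 c1 x y) * v1 ^+ 2
  + ((1 + alpha ^+ 2) / 2 - (1 - alpha ^+ 2) / 2 * f1 c1 x y) * v2 ^+ 2
  + (1 - alpha ^+ 2) * f2 c2 x y * v1 * v2
  + v3 ^+ 2.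

Definition g_alpha {R : realType} (alpha c1 c2 t x y z w v1 v2 v3 : R) : R :=
  - w ^+ 2 + rho alpha c1 c2 x y z v1 v2 v3.

Definition C1_on {R : realType} (I : set R) (f : R -> R) : Prop :=
  forall s, I s -> derivable f s 1 /\ {for s, continuous (derive1 f)}.

Definition has_right_endpoint {R : realType} (I : set R) (g0 g1 g2 g3 : R -> R)
  : Prop :=
  exists p0 p1 p2 p3 : R, forall eps : R, 0 < eps ->
    exists s0, I s0 /\ forall s, I s -> s0 <= s ->
      [/\ `|g0 s - p0| < eps, `|g1 s - p1| < eps, `|g2 s - p2| < eps
        & `|g3 s - p3| < eps].
Definition has_left_endpoint {R : realType} (I : set R) (g0 g1 g2 g3 : R -> R)
  : Prop :=
  exists p0 p1 p2 p3 : R, forall eps : R, 0 < eps ->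
    exists s0, I s0 /\ forall s, I s -> s <= s0 ->
      [/\ `|g0 s - p0| < eps, `|g1 s - p1| < eps, `|g2 s - p2| < eps
        & `|g3 s - p3| < eps].

Definition inextendible {R : realType} (I : set R) (g0 g1 g2 g3 : R -> R)
  : Prop :=
  ~ has_right_endpoint I g0 g1 g2 g3 /\ ~ has_left_endpoint I g0 g1 g2 g3.

(* Main.v *)
Require Import Defs.
From HB Require Import structures.
From mathcomp Require Import all_boot all_order all_algebra.
From mathcomp Require Import all_classical all_reals all_analysis.
From mathcomp Require Import ring lra.
Import Order.TTheory GRing.Theory Num.Theory.
Import numFieldNormedType.Exports.
Local Open Scope classical_set_scope.
Local Open Scope ring_scope.

Section S.
Variable R : realType.

Lemma rho_ge (alpha c1 c2 x y z v1 v2 v3 : R) : alpha ^+ 2 <= 1 ->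
  (x != 0) || (y != 0) ->
  alpha ^+ 2 * (v1 ^+ 2 + v2 ^+ 2) + v3 ^+ 2 <= rho alpha c1 c2 x y z v1 v2 v3.
Proof.
move=> a1 xy.
have r0 : 0 < x ^+ 2 + y ^+ 2.
  case/orP: xy => h.
    have := sqr_ge0 y; have : 0 < x ^+ 2 by rewrite exprn_even_gt0 //=.
    lra.
  have := sqr_ge0 x; have : 0 < y ^+ 2 by rewrite exprn_even_gt0 //=.
  lra.
have hxy : ((x == 0) && (y == 0)) = false.
  by case/orP: xy => /negPf ->; rewrite ?andbF.
rewrite -subr_ge0 /rho /f1 /f2 hxy.
have -> : ((1 + alpha ^+ 2) / 2 + (1 - alpha ^+ 2) / 2 * ((x ^+ 2 - y ^+ 2) / (x ^+ 2 + y ^+ 2))) * v1 ^+ 2 +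
  ((1 + alpha ^+ 2) / 2 - (1 - alpha ^+ 2) / 2 * ((x ^+ 2 - y ^+ 2) / (x ^+ 2 + y ^+ 2))) * v2 ^+ 2 +
  (1 - alpha ^+ 2) * (2 * x * y / (x ^+ 2 + y ^+ 2)) * v1 * v2 + v3 ^+ 2 -
  (alpha ^+ 2 * (v1 ^+ 2 + v2 ^+ 2) + v3 ^+ 2) =
  (1 - alpha ^+ 2) * (x * v1 + y * v2) ^+ 2 / (x ^+ 2 + y ^+ 2).
  by field; rewrite gt_eqF.
by apply: divr_ge0; [apply: mulr_ge0; [rewrite subr_ge0|exact: sqr_ge0]|exact: ltW].
Qed.


Definition rlim (I : set R) (F : R -> R) (p : R) := forall eps : R, 0 < eps ->
  exists s0, I s0 /\ forall s, I s -> s0 <= s -> `|F s - p| < eps.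

Definition mono_on (I : set R) (F : R -> R) :=
  forall s t, I s -> I t -> s <= t -> F s <= F t.

Lemma I_max (I : set R) x y : I x -> I y -> I (Num.max x y).
Proof. by rewrite /Num.max; case: ifP. Qed.

Lemma mono_rlim (I : set R) F M : (exists s, I s) -> mono_on I F ->
  (forall s, I s -> F s <= M) -> exists p, rlim I F p.
Proof.
move=> [x Ix] mF FM.
have hs : has_sup (F @` I).
  split; first by exists (F x), x.
  by exists M => _ [s Is <-]; exact: FM.
exists (sup (F @` I)) => eps e0.
have [_ [s0 Is0 <-] hlt] := sup_adherent e0 hs.
exists s0; split => // s Is le.
have h1 : F s <= sup (F @` I) by apply: sup_upper_bound => //; exists s.
have h2 := mF _ _ Is0 Is le.
rewrite distrC ger0_norm; lra.
Qed.

Lemma rlim_lin (I : set R) F1 F2 p1 p2 : rlim I F1 p1 -> rlim I F2 p2 ->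
  rlim I (fun s => (F1 s - F2 s) / 2) ((p1 - p2) / 2).
Proof.
move=> h1 h2 eps e0.
have [s1 [Is1 H1]] := h1 eps e0.
have [s2 [Is2 H2]] := h2 eps e0.
exists (Num.max s1 s2); split; first exact: I_max.
move=> s Is; rewrite ge_max => /andP[l1 l2].
have := H1 s Is l1; have := H2 s Is l2.
rewrite !ltr_norml => /andP[? ?] /andP[? ?]; apply/andP; split; lra.
Qed.

Lemma rlim_ext (I : set R) F H p : (forall s, I s -> F s = H s) -> rlim I H p ->
  rlim I F p.
Proof.
move=> e h eps e0; have [s0 [Is0 H0]] := h eps e0; exists s0; split => //.
by move=> s Is le; rewrite e //; exact: H0.
Qed.

Definition lip_on (I : set R) (G g : R -> R) (K : R) :=
  forall s t, I s -> I t -> s <= t -> `|g t - g s| <= K * (G t - G s).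

Lemma lip_rlim (I : set R) G g K t0 : (exists s, I s) -> 0 <= K ->
  mono_on I G -> (forall s, I s -> G s <= t0) -> lip_on I G g K ->
  exists p, rlim I g p.
Proof.
move=> [x Ix] K0 mG Gt lip.
have mF1 : mono_on I (fun s => K * G s + g s).
  move=> s t Is It le; have := lip _ _ Is It le; rewrite ler_norml.
  move=> /andP[h1 h2]; lra.
have mF2 : mono_on I (fun s => K * G s - g s).
  move=> s t Is It le; have := lip _ _ Is It le; rewrite ler_norml.
  move=> /andP[h1 h2]; lra.
have bnd : forall s, I s -> K * G s <= K * G x + K * (t0 - G x) + `|K * (t0 - G x)|.
  move=> s Is; rewrite -mulrDr.
  have -> : G x + (t0 - G x) = t0 by ring.
  have := Gt s Is => h; have : K * G s <= K * t0 by rewrite ler_wpM2l.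
  have := normr_ge0 (K * (t0 - G x)); lra.
have b1 : forall s, I s -> K * G s + g s <=
    K * G x + g x + 2 * `|K * (t0 - G x)| + 2 * `|K * (t0 - G x)|.
  move=> s Is; case: (leP x s) => xs.
    have := lip _ _ Ix Is xs; rewrite ler_norml => /andP[h1 h2].
    have : K * (G s - G x) <= `|K * (t0 - G x)|.
      apply: le_trans (ler_norm _); rewrite ler_wpM2l //.
      by have := Gt s Is; lra.
    have := normr_ge0 (K * (t0 - G x)); lra.
  have := mF1 _ _ Is Ix (ltW xs).
  have := normr_ge0 (K * (t0 - G x)); lra.
have b2 : forall s, I s -> K * G s - g s <=
    K * G x - g x + 2 * `|K * (t0 - G x)| + 2 * `|K * (t0 - G x)|.
  move=> s Is; case: (leP x s) => xs.
    have := lip _ _ Ix Is xs; rewrite ler_norml => /andP[h1 h2].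
    have : K * (G s - G x) <= `|K * (t0 - G x)|.
      apply: le_trans (ler_norm _); rewrite ler_wpM2l //.
      by have := Gt s Is; lra.
    have := normr_ge0 (K * (t0 - G x)); lra.
  have := mF2 _ _ Is Ix (ltW xs).
  have := normr_ge0 (K * (t0 - G x)); lra.
have [p1 h1] := @mono_rlim I _ _ (ex_intro _ x Ix) mF1 b1.
have [p2 h2] := @mono_rlim I _ _ (ex_intro _ x Ix) mF2 b2.
have hh := @rlim_lin I _ _ _ _ h1 h2. exists ((p1 - p2) / 2). eapply rlim_ext; last exact hh.
by move=> s _; field.
Qed.


Lemma rlim_endpoint (I : set R) G g1 g2 g3 p0 p1 p2 p3 :
  rlim I G p0 -> rlim I g1 p1 -> rlim I g2 p2 -> rlim I g3 p3 ->
  has_right_endpoint I G g1 g2 g3.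
Proof.
move=> h0 h1 h2 h3; exists p0, p1, p2, p3 => eps e0.
have [s0 [I0 H0]] := h0 eps e0.
have [s1 [I1 H1]] := h1 eps e0.
have [s2 [I2 H2]] := h2 eps e0.
have [s3 [I3 H3]] := h3 eps e0.
exists (Num.max (Num.max s0 s1) (Num.max s2 s3)); split.
  by apply: I_max; apply: I_max.
move=> s Is; rewrite !ge_max => /andP[/andP[l0 l1] /andP[l2 l3]].
by split; [exact: H0|exact: H1|exact: H2|exact: H3].
Qed.

Lemma part1 (I : set R) G g1 g2 g3 K t0 : (exists s, I s) -> 0 <= K ->
  mono_on I G -> lip_on I G g1 K -> lip_on I G g2 K -> lip_on I G g3 K ->
  ~ has_right_endpoint I G g1 g2 g3 -> exists s, I s /\ t0 <= G s.
Proof.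
move=> ne K0 mG l1 l2 l3 nr; apply: contrapT => hn; apply: nr.
have Gt : forall s, I s -> G s <= t0.
  move=> s Is; rewrite leNgt; apply/negP => h; apply: hn; exists s; split => //.
  exact: ltW.
have [p0 h0] := @mono_rlim I G t0 ne mG Gt.
have [p1 h1] := @lip_rlim I G g1 K t0 ne K0 mG Gt l1.
have [p2 h2] := @lip_rlim I G g2 K t0 ne K0 mG Gt l2.
have [p3 h3] := @lip_rlim I G g3 K t0 ne K0 mG Gt l3.
exact: rlim_endpoint h0 h1 h2 h3.
Qed.

Lemma part2 (I : set R) G g1 g2 g3 K t0 : (exists s, I s) -> 0 <= K ->
  mono_on I G -> lip_on I G g1 K -> lip_on I G g2 K -> lip_on I G g3 K ->
  ~ has_left_endpoint I G g1 g2 g3 -> exists s, I s /\ G s <= t0.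
Proof.
move=> [x Ix] K0 mG l1 l2 l3 nl.
pose J := [set s : R | I (- s)].
have lipr : forall g, lip_on I G g K ->
    lip_on J (fun s => - G (- s)) (fun s => g (- s)) K.
  move=> g l s t Js Jt st; rewrite /= distrC.
  have -> : - G (- t) - - G (- s) = G (- s) - G (- t) by ring.
  by apply: l => //; rewrite lerN2.
have := @part1 J (fun s => - G (- s)) (fun s => g1 (- s)) (fun s => g2 (- s))
  (fun s => g3 (- s)) K (- t0).
case.
- by exists (- x); rewrite /J /= opprK.
- exact: K0.
- move=> s t Js Jt st; rewrite lerN2; apply: mG => //; by rewrite lerN2.
- exact: lipr.
- exact: lipr.
- exact: lipr.
- move=> [p0 [p1 [p2 [p3 hr]]]]; apply: nl.
  exists (- p0), p1, p2, p3 => eps e0.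
  have [s0 [Js0 H0]] := hr eps e0.
  exists (- s0); split => // s Is le.
  have Js : J (- s) by rewrite /J /= opprK.
  have := H0 (- s) Js; rewrite lerNr => /(_ le); rewrite !opprK.
  case=> h0 h1 h2 h3; split => //.
  by rewrite -normrN opprD.
- move=> s [Js le]; exists (- s); split => //.
  by move: le; rewrite lerN2.
Qed.


Section Itv.
Variables (a b : \bar R).
Let I := [set s : R | (a < s%:E < b)%E].

Lemma I_conv s t x : I s -> I t -> s <= x -> x <= t -> I x.
Proof.
rewrite /I /= => /andP[aS _] /andP[_ tb] sx xt; apply/andP; split.
  by apply: lt_le_trans aS _; rewrite lee_fin.
by apply: le_lt_trans tb; rewrite lee_fin.
Qed.

Lemma I_ne : (a < b)%E -> exists s, I s.
Proof.
rewrite /I; case: a => [r||]; case: b => [r'||] //= ab.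
- exists ((r + r') / 2); rewrite !lte_fin; move: ab; rewrite lte_fin => ab.
  apply/andP; split; lra.
- by exists (r + 1); rewrite !lte_fin ltry andbT; lra.
- by exists (r' - 1); rewrite !lte_fin ltNyr /=; lra.
- by exists 0; rewrite ltNyr ltry.
Qed.

Lemma mvt_I (f df : R -> R) : (forall s, I s -> is_derive s 1 f (df s)) ->
  forall s t, I s -> I t -> s <= t -> exists2 c, I c & f t - f s = df c * (t - s).
Proof.
move=> hd s t Is It st.
have sub : forall x, x \in `[s, t] -> I x.
  by move=> x; rewrite in_itv /= => /andP[h1 h2]; exact: I_conv Is It h1 h2.
have h1 : forall x, x \in `]s, t[ -> is_derive x 1 f (df x).
  move=> x; rewrite in_itv /= => /andP[h1 h2]; apply: hd.
  by apply: sub; rewrite in_itv /= !ltW.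
have h2 : {within `[s, t], continuous f}.
  apply: derivable_within_continuous => x xin.
  by have := hd x (sub x xin) => -[].
have [c cin ->] := @MVT_segment R f df s t st h1 h2.
by exists c => //; exact: sub.
Qed.

Lemma isd (f : R -> R) x : derivable f x 1 -> is_derive x 1 f (derive1 f x).
Proof. by move=> h; rewrite derive1E; exact: derive.derivableP. Qed.
Arguments isd {f x}.

Lemma lip_deriv (G g : R -> R) K : (forall s, I s -> derivable G s 1) ->
  (forall s, I s -> derivable g s 1) ->
  (forall s, I s -> `|derive1 g s| <= K * derive1 G s) -> lip_on I G g K.
Proof.
move=> dG dg hb s t Is It st.
have [c Ic e1] := @mvt_I (fun x => K * G x + g x) (fun x => K * derive1 G x + derive1 g x)
  (fun x Ix => is_deriveD (is_deriveZ K (isd (dG x Ix))) (isd (dg x Ix))) s t Is It st.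
have [d Id e2] := @mvt_I (fun x => K * G x - g x) (fun x => K * derive1 G x - derive1 g x)
  (fun x Ix => is_deriveB (is_deriveZ K (isd (dG x Ix))) (isd (dg x Ix))) s t Is It st.
have p1 : 0 <= (K * derive1 G c + derive1 g c) * (t - s).
  apply: mulr_ge0; last by rewrite subr_ge0.
  by have := hb c Ic; rewrite ler_norml => /andP[? ?]; lra.
have p2 : 0 <= (K * derive1 G d - derive1 g d) * (t - s).
  apply: mulr_ge0; last by rewrite subr_ge0.
  by have := hb d Id; rewrite ler_norml => /andP[? ?]; lra.
rewrite ler_norml; apply/andP; split; lra.
Qed.

Lemma smono_deriv (G : R -> R) : (forall s, I s -> derivable G s 1) ->
  (forall s, I s -> 0 < derive1 G s) ->
  forall s t, I s -> I t -> s < t -> G s < G t.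
Proof.
move=> dG pos s t Is It st.
have [c Ic e] := @mvt_I G (fun x => derive1 G x) (fun x Ix => isd (dG x Ix)) s t Is It (ltW st).
rewrite -subr_gt0 e; apply: mulr_gt0; [exact: pos | by rewrite subr_gt0].
Qed.

Lemma cross (G g1 g2 g3 : R -> R) K t0 : (a < b)%E -> 0 <= K ->
  (forall s, I s -> derivable G s 1) -> (forall s, I s -> 0 < derive1 G s) ->
  lip_on I G g1 K -> lip_on I G g2 K -> lip_on I G g3 K ->
  ~ has_right_endpoint I G g1 g2 g3 -> ~ has_left_endpoint I G g1 g2 g3 ->
  exists! s, I s /\ G s = t0.
Proof.
move=> ab K0 dG pos l1 l2 l3 nr nl.
have ne := I_ne ab.
have sm := @smono_deriv G dG pos.
have mG : mono_on I G.
  move=> s t Is It; rewrite le_eqVlt => /orP[/eqP -> //| st].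
  exact/ltW/sm.
have [s1 [I1 h1]] := @part1 I G g1 g2 g3 K t0 ne K0 mG l1 l2 l3 nr.
have [s2 [I2 h2]] := @part2 I G g1 g2 g3 K t0 ne K0 mG l1 l2 l3 nl.
have [c [Ic Gc]] : exists c, I c /\ G c = t0.
  case: (leP s2 s1) => s21.
    have sub : forall x, x \in `[s2, s1] -> I x.
      by move=> x; rewrite in_itv /= => /andP[u v]; exact: I_conv I2 I1 u v.
    have cont : {within `[s2, s1], continuous G}.
      apply: derivable_within_continuous => x xin; exact: dG (sub x xin).
    have mm : Num.min (G s2) (G s1) <= t0 <= Num.max (G s2) (G s1).
      by rewrite ge_min le_max h2 h1 orbT.
    have [c cin Gc] := @IVT R G s2 s1 t0 s21 cont mm.
    by exists c; split => //; exact: sub.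
  have := sm _ _ I1 I2 s21; lra.
exists c; split => // y [Iy Gy].
case: (ltgtP c y) => // cy.
  by have := sm _ _ Ic Iy cy; lra.
by have := sm _ _ Iy Ic cy; lra.
Qed.

End Itv.

Lemma itv_notin (N : set R) u v : measurable N -> (@lebesgue_measure R) N = 0%E ->
  u < v -> exists y, u < y < v /\ ~ N y.
Proof.
move=> mN N0 uv; apply: contrapT => h.
have sub : [set` `]u, v[] `<=` N.
  move=> y /=; rewrite in_itv /= => hy; apply: contrapT => ny; apply: h.
  by exists y.
have mI : [set` `]u, v[] \in measurable by rewrite inE; exact: measurable_itv.
have H : ((@lebesgue_measure R) [set` `]u, v[] <= (@lebesgue_measure R) N)%E.
  by apply: le_measure => //; rewrite inE.
move: H; rewrite N0 lebesgue_measure_itv /= lte_fin uv -EFinB lee_fin subr_le0.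
by rewrite leNgt uv.
Qed.


Lemma near_ball (x : R) (P : R -> Prop) : (\forall y \near x, P y) ->
  exists2 e, 0 < e & forall y, x - e < y < x + e -> P y.
Proof.
move=> /nbhs_ballP [e /= e0 he]; exists e => // y hy; apply: he.
by rewrite /ball /= ltr_distlC.
Qed.

Arguments near_ball {x P}.
Arguments itv_notin {N u v}.

Lemma I_near (a b : \bar R) s : (a < s%:E < b)%E ->
  \forall y \near s, (a < y%:E < b)%E.
Proof.
move=> /andP[h1 h2].
have A : \forall y \near s, (a < y%:E)%E.
  move: h1; case: a => [r||] //= h1.
    rewrite lte_fin in h1; near=> y; rewrite lte_fin; near: y.
    exact: lt_nbhsr.
  by near=> y; exact: ltNyr.
have B : \forall y \near s, (y%:E < b)%E.
  move: h2; case: b => [r||] //= h2.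
    rewrite lte_fin in h2; near=> y; rewrite lte_fin; near: y.
    exact: lt_nbhsl.
  by near=> y; exact: ltry.
by near=> y; apply/andP; split; near: y.
Unshelve. all: end_near.
Qed.

Arguments I_near {a b s}.

Lemma der_cont (g : R -> R) x : derivable g x 1 -> {for x, continuous g}.
Proof. by move=> d; apply: differentiable_continuous; exact/derivable1_diffP. Qed.
Arguments der_cont {g x}.



Lemma key (alpha c1 c2 : R) (a b : \bar R) (g0 g1 g2 g3 : R -> R) :
  0 < alpha < 1 ->
  let I := [set s : R | (a < s%:E < b)%E] in
  C1_on I g0 -> C1_on I g1 -> C1_on I g2 -> C1_on I g3 ->
  {ae (@lebesgue_measure R), forall s, I s ->
        g_alpha alpha c1 c2 (g0 s) (g1 s) (g2 s) (g3 s)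
          (derive1 g0 s) (derive1 g1 s) (derive1 g2 s) (derive1 g3 s) < 0} ->
  forall s, I s -> alpha ^+ 2 * (derive1 g1 s ^+ 2 + derive1 g2 s ^+ 2)
     + derive1 g3 s ^+ 2 <= derive1 g0 s ^+ 2.
Proof.
move=> /andP[a0 a1] I C0 C1 C2 C3 [N [mN N0 hN]].
have al1 : alpha ^+ 2 <= 1.
  by rewrite expr2; have := mulr_ge0 (ltW a0) (ltW a0); nra.
have ga : forall y, I y -> ~ N y -> g_alpha alpha c1 c2 (g0 y) (g1 y) (g2 y) (g3 y)
          (derive1 g0 y) (derive1 g1 y) (derive1 g2 y) (derive1 g3 y) < 0.
  move=> y Iy ny; apply: contrapT => h; apply: ny; apply: hN => /= h'.
  by apply: h; apply: h'.
pose D0 := derive1 g0; pose D1 := derive1 g1; pose D2 := derive1 g2;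
  pose D3 := derive1 g3.
pose hf := D0 \* D0 - (cst (alpha ^+ 2) \* (D1 \* D1 + D2 \* D2) + D3 \* D3).
have hfE : forall y, hf y = derive1 g0 y ^+ 2 -
   (alpha ^+ 2 * (derive1 g1 y ^+ 2 + derive1 g2 y ^+ 2) + derive1 g3 y ^+ 2).
  by move=> y; rewrite /hf /= !expr2.
have good : forall u v, u < v -> (forall x, u < x < v -> I x) ->
    exists x, u < x < v /\ 0 <= hf x.
  move=> u v uv sub.
  case: (pselect (exists x, u < x < v /\ ((g1 x != 0) || (g2 x != 0)))).
    move=> [x [xuv nz]].
    have c1x := der_cont (C1 x (sub x xuv)).1.
    have c2x := der_cont (C2 x (sub x xuv)).1.
    have nb : \forall y \near x, u < y < v /\ ((g1 y != 0) || (g2 y != 0)).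
      have hin : \forall y \near x, u < y < v.
        have := @near_in_itvoo R u v x; rewrite in_itv /= => /(_ xuv).
        by apply: filterS => y; rewrite in_itv.
      case/orP: nz => nz.
        have h : \forall y \near x, 0 < `|g1 y|.
          by apply: (cvgr_gt _ (cvg_norm c1x) 0); rewrite normr_gt0.
        near=> y; split; first by near: y.
        by apply/orP; left; rewrite -normr_gt0; near: y.
      have h : \forall y \near x, 0 < `|g2 y|.
          by apply: (cvgr_gt _ (cvg_norm c2x) 0); rewrite normr_gt0.
      near=> y; split; first by near: y.
      by apply/orP; right; rewrite -normr_gt0; near: y.
    have [e e0 he] := near_ball nb.
    have [|y [yin ny]] := itv_notin mN N0 (_ : x - e < x + e); first by lra.
    have [yuv nzy] := he y yin.
    have Iy := sub y yuv.
    have := ga y Iy ny; rewrite /g_alpha.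
    have := rho_ge alpha c1 c2 (g1 y) (g2 y) (g3 y) (derive1 g1 y) (derive1 g2 y) (derive1 g3 y) al1 nzy.
    move=> h1 h2; exists y; split => //; rewrite hfE; lra.
  move=> hz.
  have [y [yuv ny]] := itv_notin mN N0 uv.
  have z12 : forall x, u < x < v -> g1 x = 0 /\ g2 x = 0.
    move=> x xuv; case: (eqVneq (g1 x) 0) => h1; case: (eqVneq (g2 x) 0) => h2 //;
      exfalso; apply: hz; exists x; split => //; by rewrite ?h1 ?h2 ?orbT.
  have hin : \forall z \near y, u < z < v.
    have := @near_in_itvoo R u v y; rewrite in_itv /= => /(_ yuv).
    by apply: filterS => z; rewrite in_itv.
  have d1 : derive1 g1 y = 0.
    rewrite derive1E (@near_eq_derive _ _ _ g1 (cst 0)) ?derive_cst //.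
    by near=> z; rewrite (z12 z _).1 //; near: z.
  have d2 : derive1 g2 y = 0.
    rewrite derive1E (@near_eq_derive _ _ _ g2 (cst 0)) ?derive_cst //.
    by near=> z; rewrite (z12 z _).2 //; near: z.
  have := ga y (sub y yuv) ny; rewrite /g_alpha /rho d1 d2.
  rewrite !expr2 !mulr0 !add0r => h.
  exists y; split => //; rewrite hfE d1 d2 !expr2 !mulr0 !add0r mulr0. lra.
move=> s Is; rewrite -subr_ge0 -hfE leNgt; apply/negP => hs.
have cont : hf @ s --> hf s.
  have k0 := (C0 s Is).2; have k1 := (C1 s Is).2; have k2 := (C2 s Is).2;
    have k3 := (C3 s Is).2.
  apply: cvgB; first exact: cvgM.
  apply: cvgD; last exact: cvgM.
  apply: cvgM; first exact: cvg_cst.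
  by apply: cvgD; apply: cvgM.
have nb : \forall y \near s, hf y < 0 /\ I y.
  have h1 : \forall y \near s, hf y < 0.
    exact: (cvgr_lt _ cont 0 hs).
  have h2 := I_near Is.
  by near=> y; split; near: y.
have [e e0 he] := near_ball nb.
have se : s - e < s + e by lra.
have sub : forall x, s - e < x < s + e -> I x by move=> x /he [].
have [x [xin hx]] := good (s - e) (s + e) se sub.
by have [+ _] := he x xin; lra.
Unshelve. all: end_near.
Qed.

End S.

Lemma no_sign_change (R : realType) (a b : \bar R) (f : R -> R) :
  (forall s, (a < s%:E < b)%E -> {for s, continuous f}) ->
  (forall s, (a < s%:E < b)%E -> f s != 0) ->
  forall x y, (a < x%:E < b)%E -> (a < y%:E < b)%E -> x <= y ->
  Num.min (f x) (f y) <= 0 <= Num.max (f x) (f y) -> False.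
Proof.
move=> cf nz x y Ix Iy xy mm.
have sub : forall z, z \in `[x, y] -> (a < z%:E < b)%E.
  by move=> z; rewrite in_itv /= => /andP[u v]; exact: I_conv Ix Iy u v.
have cont : {within `[x, y], continuous f}.
  apply: continuous_in_subspaceT => z; rewrite inE /= => zin.
  exact: cf (sub z zin).
have [c cin fc] := @IVT R f x y 0 xy cont mm.
by have := nz c (sub c cin); rewrite fc eqxx.
Qed.

Lemma sq_le (R : realType) (x y : R) : 0 <= x -> 0 <= y -> x * x <= y * y -> x <= y.
Proof. move=> x0 y0 h; rewrite leNgt; apply/negP => yx; nra. Qed.

Lemma neg_right (R : realType) (I : set R) g0 g1 g2 g3 :
  has_right_endpoint I (fun s => - g0 s) g1 g2 g3 -> has_right_endpoint I g0 g1 g2 g3.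
Proof.
move=> [p0 [p1 [p2 [p3 h]]]]; exists (- p0), p1, p2, p3 => eps e0.
have [s0 [Is0 H]] := h eps e0; exists s0; split => // s Is le.
have [h0 h1 h2 h3] := H s Is le; split => //.
by move: h0; rewrite -normrN opprD opprK.
Qed.

Lemma neg_left (R : realType) (I : set R) g0 g1 g2 g3 :
  has_left_endpoint I (fun s => - g0 s) g1 g2 g3 -> has_left_endpoint I g0 g1 g2 g3.
Proof.
move=> [p0 [p1 [p2 [p3 h]]]]; exists (- p0), p1, p2, p3 => eps e0.
have [s0 [Is0 H]] := h eps e0; exists s0; split => // s Is le.
have [h0 h1 h2 h3] := H s Is le; split => //.
by move: h0; rewrite -normrN opprD opprK.
Qed.

Theorem mainTheorem2 (R : realType) (alpha c1 c2 : R) :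
  0 < alpha < 1 ->
  (* (i) *)
  (forall x y z v1 v2 v3 : R, (x != 0) || (y != 0) ->
     rho alpha c1 c2 x y z v1 v2 v3 >= alpha ^+ 2 * (v1 ^+ 2 + v2 ^+ 2) + v3 ^+ 2)
  /\
  (* (ii) *)
  (forall (t0 : R) (a b : \bar R) (g0 g1 g2 g3 : R -> R),
     let I := [set s : R | (a < s%:E < b)%E] in
     (a < b)%E ->
     C1_on I g0 -> C1_on I g1 -> C1_on I g2 -> C1_on I g3 ->
     inextendible I g0 g1 g2 g3 ->
     (forall s, I s ->
        ~ [/\ derive1 g0 s = 0, derive1 g1 s = 0, derive1 g2 s = 0 & derive1 g3 s = 0]) ->
     {ae (@lebesgue_measure R), forall s, I s ->
        g_alpha alpha c1 c2 (g0 s) (g1 s) (g2 s) (g3 s)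
          (derive1 g0 s) (derive1 g1 s) (derive1 g2 s) (derive1 g3 s) < 0} ->
     exists! s, I s /\ g0 s = t0).
Proof.
move=> al; have /andP[a0 a1] := al.
have al1 : alpha ^+ 2 <= 1.
  by rewrite expr2; have := mulr_ge0 (ltW a0) (ltW a0); nra.
split; first by move=> x y z v1 v2 v3 h; exact: rho_ge.
move=> t0 a b g0 g1 g2 g3 I ab C0 C1 C2 C3 [nr nl] nz ae.
have K := @key R alpha c1 c2 a b g0 g1 g2 g3 al C0 C1 C2 C3 ae.
have bnd : forall s, I s -> [/\ `|derive1 g1 s| <= alpha^-1 * `|derive1 g0 s|,
    `|derive1 g2 s| <= alpha^-1 * `|derive1 g0 s| &
    `|derive1 g3 s| <= alpha^-1 * `|derive1 g0 s|].
  move=> s Is; have := K s Is.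
  set u0 := derive1 g0 s; set u1 := derive1 g1 s; set u2 := derive1 g2 s;
    set u3 := derive1 g3 s => h.
  have e0 : u0 ^+ 2 = `|u0| ^+ 2 by rewrite real_normK // num_real.
  have e1 : u1 ^+ 2 = `|u1| ^+ 2 by rewrite real_normK // num_real.
  have e2 : u2 ^+ 2 = `|u2| ^+ 2 by rewrite real_normK // num_real.
  have e3 : u3 ^+ 2 = `|u3| ^+ 2 by rewrite real_normK // num_real.
  rewrite e0 e1 e2 e3 !expr2 in h.
  have n0 := normr_ge0 u0; have n1 := normr_ge0 u1; have n2 := normr_ge0 u2;
    have n3 := normr_ge0 u3.
  have ai : 0 <= alpha^-1 by rewrite invr_ge0 ltW.
  have conv : forall w, alpha * w <= `|u0| -> w <= alpha^-1 * `|u0|.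
    move=> w hw; have -> : w = alpha^-1 * (alpha * w).
      by rewrite mulrA mulVf ?mul1r // gt_eqF.
    exact: ler_wpM2l.
  have am : 0 <= alpha * alpha by rewrite mulr_ge0 // ltW.
  have q1 := mulr_ge0 n1 n1; have q2 := mulr_ge0 n2 n2; have q3 := mulr_ge0 n3 n3.
  have m1 := mulr_ge0 am q1; have m2 := mulr_ge0 am q2.
  split; apply: conv; apply: sq_le => //; rewrite ?mulr_ge0 //; try exact: ltW.
  - nra.
  - nra.
  - have : `|u3| * `|u3| <= `|u0| * `|u0| by nra.
    move=> h3; have h1a : 0 <= 1 - alpha by lra.
    have h2a : 0 <= alpha + 1 by lra.
    have := mulr_ge0 h1a (mulr_ge0 h2a q3).
    nra.
have d0nz : forall s, I s -> derive1 g0 s != 0.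
  move=> s Is; apply/eqP => h; apply: (nz s Is); have [b1 b2 b3] := bnd s Is.
  rewrite h normr0 mulr0 !normr_le0 in b1 b2 b3.
  by split => //; apply/eqP.
have sgn : (forall s, I s -> 0 < derive1 g0 s) \/ (forall s, I s -> derive1 g0 s < 0).
  case: (pselect (exists s, I s /\ derive1 g0 s < 0)) => [[s2 [I2 n2]]|hn]; last first.
    left => s Is; rewrite lt_neqAle eq_sym d0nz //=; rewrite leNgt; apply/negP => h.
    by apply: hn; exists s; split.
  case: (pselect (exists s, I s /\ 0 < derive1 g0 s)) => [[s1 [I1 p1]]|hp]; last first.
    right => s Is; rewrite lt_neqAle d0nz //=; rewrite leNgt; apply/negP => h.
    by apply: hp; exists s; split.
  exfalso.
  have cd : forall s, I s -> {for s, continuous (derive1 g0)} by move=> s Is; exact: (C0 s Is).2.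
  case: (leP s1 s2) => s12.
    apply: (@no_sign_change R a b _ cd d0nz s1 s2 I1 I2 s12).
    by rewrite ge_min le_max (ltW n2) (ltW p1) orbT.
  apply: (@no_sign_change R a b _ cd d0nz s2 s1 I2 I1 (ltW s12)).
  by rewrite ge_min le_max (ltW n2) (ltW p1) orbT.
case: sgn => [pos|neg].
  apply: (@cross R a b g0 g1 g2 g3 alpha^-1 t0 ab _ (fun s Is => (C0 s Is).1) pos) => //.
  - by rewrite invr_ge0 ltW.
  - apply: lip_deriv => //; first by move=> s Is; exact: (C0 s Is).1.
      by move=> s Is; exact: (C1 s Is).1.
    by move=> s Is; have [b1 _ _] := bnd s Is; rewrite -(gtr0_norm (pos s Is)).
  - apply: lip_deriv => //; first by move=> s Is; exact: (C0 s Is).1.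
      by move=> s Is; exact: (C2 s Is).1.
    by move=> s Is; have [_ b2 _] := bnd s Is; rewrite -(gtr0_norm (pos s Is)).
  - apply: lip_deriv => //; first by move=> s Is; exact: (C0 s Is).1.
      by move=> s Is; exact: (C3 s Is).1.
    by move=> s Is; have [_ _ b3] := bnd s Is; rewrite -(gtr0_norm (pos s Is)).
pose G := fun s => - g0 s.
have dG : forall s, I s -> is_derive s 1 G (- derive1 g0 s).
  move=> s Is; have h := is_deriveN (@isd R _ _ (C0 s Is).1); exact h.
have dGd : forall s, I s -> derivable G s 1 by move=> s Is; have [] := dG s Is.
have dGe : forall s, I s -> derive1 G s = - derive1 g0 s.
  by move=> s Is; have [_ h] := dG s Is; rewrite derive1E h.
have posG : forall s, I s -> 0 < derive1 G s.
  by move=> s Is; rewrite dGe // oppr_gt0; exact: neg.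
have nbd : forall s, I s -> `|derive1 g0 s| = derive1 G s.
  by move=> s Is; rewrite dGe // ltr0_norm //; exact: neg.
have := (@cross R a b G g1 g2 g3 alpha^-1 (- t0) ab _ dGd posG).
case.
- by rewrite invr_ge0 ltW.
- apply: lip_deriv => //; first by move=> s Is; exact: (C1 s Is).1.
  by move=> s Is; have [b1 _ _] := bnd s Is; rewrite -nbd.
- apply: lip_deriv => //; first by move=> s Is; exact: (C2 s Is).1.
  by move=> s Is; have [_ b2 _] := bnd s Is; rewrite -nbd.
- apply: lip_deriv => //; first by move=> s Is; exact: (C3 s Is).1.
  by move=> s Is; have [_ _ b3] := bnd s Is; rewrite -nbd.
- by move/neg_right.
- by move/neg_left.
- move=> s [[Is e] u]; exists s; split.
    by split => //; apply: oppr_inj.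
  by move=> y [Iy Gy]; apply: u; split => //; rewrite /G Gy.
Qed.
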